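(* Let $\mathcal{X}$ be a finite set, $\pi$ a probability mass function on $\mathcal{X}$ with full support, and $P$ an ergodic $\pi$-reversible transition matrix. Let a group $\mathcal{G}$ act on $\mathcal{X}$ and let $G$ and $M$ be the Gibbs and Metropolis–Hastings orbit kernels for this same action, and $\theta:=\|M-G\|_{\ell^2_0(\pi)\to\ell^2_0(\pi)}$. Then for every positive integer $k$, $0\le\rho(M^kPM^k)-\rho(GPG)\le\rho(P)(2\theta^k+\theta^{2k})$. In particular, if $\theta<1$, then $\lim_{k\to\infty}\big(\rho(M^kPM^k)-\rho(GPG)\big)=0$.
   Context: $\langle f,g\rangle_\pi=\sum_x f(x)g(x)\pi(x)$, $\ell^2_0(\pi)=\{f:\sum_xf(x)\pi(x)=0\}$, operator norms with respect to $\|\cdot\|_\pi$. With $\mathcal{O}(x)$ the orbit of $x$: $G(x,y)=\pi(y)/\pi(\mathcal{O}(x))$ for $y\in\mathcal{O}(x)$, else $0$; $M(x,y)=\frac{1}{|\mathcal{O}(x)|-1}\min\{1,\pi(y)/\pi(x)\}$ for $y\in\mathcal{O}(x)\setminus\{x\}$, $0$ off the orbit, $M(x,x)=1-\sum_{y\ne x}M(x,y)$. For a $\pi$-self-adjoint kernel $K$, $\rho(K)=\sup_{0\ne f\in\ell^2_0(\pi)}|\langle f,Kf\rangle_\pi|/\langle f,f\rangle_\pi$. *)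

(* Defs.v *)
From HB Require Import structures.
From mathcomp Require Import all_boot all_order all_algebra all_fingroup.
From mathcomp Require Import all_classical all_reals all_analysis.
Set Implicit Arguments. Unset Strict Implicit. Unset Printing Implicit Defensive.
Import Order.TTheory GRing.Theory Num.Theory.
Local Open Scope ring_scope.
Local Open Scope classical_set_scope.

Section Kernels.
Variables (R : realType) (X : finType).

Definition kmul (K L : X -> X -> R) : X -> X -> R :=
  fun x y => \sum_(z : X) K x z * L z y.
Definition kid : X -> X -> R := fun x y => if x == y then 1 else 0.
Fixpoint kpow (K : X -> X -> R) (n : nat) : X -> X -> R :=
  match n with O => kid | S m => kmul K (kpow K m) end.
Definition kapp (K : X -> X -> R) (f : X -> R) : X -> R :=
  fun x => \sum_(y : X) K x y * f y.
Definition ksub (K L : X -> X -> R) : X -> X -> R := fun x y => K x y - L x y.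

Variable pi : X -> R.

Definition ip (f g : X -> R) : R := \sum_(x : X) f x * g x * pi x.
Definition in_l20 (f : X -> R) : Prop := \sum_(x : X) f x * pi x = 0.

Definition rho (K : X -> X -> R) : R :=
  sup [set r : R | exists f : X -> R,
        [/\ in_l20 f, f <> (fun _ => 0) & r = `|ip f (kapp K f)| / ip f f]].

Definition opnorm_l20 (K : X -> X -> R) : R :=
  sup [set r : R | exists f : X -> R,
        [/\ in_l20 f, f <> (fun _ => 0) &
            r = Num.sqrt (ip (kapp K f) (kapp K f)) / Num.sqrt (ip f f)]].

Definition is_pmf_full_support : Prop :=
  (forall x, 0 < pi x) /\ \sum_(x : X) pi x = 1.

Definition stochastic (P : X -> X -> R) : Prop :=
  (forall x y, 0 <= P x y) /\ (forall x, \sum_(y : X) P x y = 1).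

Definition reversible (P : X -> X -> R) : Prop :=
  forall x y, pi x * P x y = pi y * P y x.

Definition irreducible (P : X -> X -> R) : Prop :=
  forall x y, exists n : nat, 0 < kpow P n x y.

(* period of every state is 1: the only d >= 1 dividing every return time
   n >= 1 (with P^n(x,x) > 0) is d = 1, i.e. gcd of return times is 1 *)
Definition aperiodic (P : X -> X -> R) : Prop :=
  forall x (d : nat), (0 < d)%N ->
    (forall n : nat, (0 < n)%N -> 0 < kpow P n x x -> (d %| n)%N) -> d = 1%N.

Definition ergodic (P : X -> X -> R) : Prop := irreducible P /\ aperiodic P.

Variables (gT : finGroupType) (A : {group gT}) (to : {action gT &-> X}).

Definition orb (x : X) : {set X} := orbit to A x.

Definition gibbsK : X -> X -> R := fun x y =>
  if y \in orb x then pi y / (\sum_(z in orb x) pi z) else 0.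

Definition mhK_off (x y : X) : R :=
  if (y \in orb x) && (y != x) then
    (#|orb x|%:R - 1)^-1 * Num.min 1 (pi y / pi x)
  else 0.

Definition mhK : X -> X -> R := fun x y =>
  if y == x then 1 - \sum_(z : X | z != x) mhK_off x z else mhK_off x y.

End Kernels.

(* Main.v *)
Require Import Defs.
From HB Require Import structures.
From mathcomp Require Import all_boot all_order all_algebra all_fingroup.
From mathcomp Require Import all_classical all_reals all_analysis.
From mathcomp Require Import ring lra.
Import Order.TTheory GRing.Theory Num.Theory numFieldNormedType.Exports.
Set Implicit Arguments. Unset Strict Implicit. Unset Printing Implicit Defensive.
Local Open Scope ring_scope.
Local Open Scope classical_set_scope.

Section Gen.
Variables (R : realType) (X : finType) (pi : X -> R).
Hypothesis pipos : forall x, 0 < pi x.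
Implicit Types (K L : X -> X -> R) (f g h : X -> R).

Definition sa (K : X -> X -> R) := forall f g, ip pi f (kapp K g) = ip pi (kapp K f) g.
Definition nrm f := Num.sqrt (ip pi f f).

Lemma kapp_kmul K L f : kapp (kmul K L) f = kapp K (kapp L f).
Proof.
apply: funext => x; rewrite /kapp /kmul.
under eq_bigr do rewrite mulr_suml.
rewrite exchange_big /=; apply: eq_bigr => z _.
by rewrite mulr_sumr; apply: eq_bigr => y _; rewrite mulrA.
Qed.

Lemma kapp_kid f : kapp (@kid R X) f = f.
Proof.
apply: funext => x; rewrite /kapp /kid (bigD1 x) //= eqxx mul1r big1 ?addr0 //.
by move=> y /negbTE; rewrite eq_sym => ->; rewrite mul0r.
Qed.

Lemma kapp_kpow K n f : kapp (kpow K n) f = iter n (kapp K) f.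
Proof. by elim: n => [|n IH] /=; rewrite ?kapp_kid // kapp_kmul IH. Qed.

Lemma kappD K f g : kapp K (fun x => f x + g x) = (fun x => kapp K f x + kapp K g x).
Proof. by apply: funext => x; rewrite /kapp -big_split; apply: eq_bigr => y _; rewrite mulrDr. Qed.
Lemma kappZ K a f : kapp K (fun x => a * f x) = (fun x => a * kapp K f x).
Proof. by apply: funext => x; rewrite /kapp mulr_sumr; apply: eq_bigr => y _; rewrite mulrCA. Qed.
Lemma kappB K f g : kapp K (fun x => f x - g x) = (fun x => kapp K f x - kapp K g x).
Proof. by apply: funext => x; rewrite /kapp -sumrB; apply: eq_bigr => y _; rewrite mulrBr. Qed.
Lemma kapp0 K : kapp K (fun _ => 0) = (fun _ => 0).
Proof. by apply: funext => x; rewrite /kapp big1 // => y _; rewrite mulr0. Qed.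
Lemma kapp_ksub K L f : kapp (ksub K L) f = (fun x => kapp K f x - kapp L f x).
Proof. by apply: funext => x; rewrite /kapp /ksub -sumrB; apply: eq_bigr => y _; rewrite mulrBl. Qed.

Lemma ipC f g : ip pi f g = ip pi g f.
Proof. by apply: eq_bigr => x _; rewrite (mulrC (f x)). Qed.
Lemma ipDl f g h : ip pi (fun x => f x + g x) h = ip pi f h + ip pi g h.
Proof. by rewrite /ip -big_split; apply: eq_bigr => x _ /=; rewrite !mulrDl. Qed.
Lemma ipBl f g h : ip pi (fun x => f x - g x) h = ip pi f h - ip pi g h.
Proof. by rewrite /ip -sumrB; apply: eq_bigr => x _ /=; rewrite !mulrBl. Qed.
Lemma ipZl a f h : ip pi (fun x => a * f x) h = a * ip pi f h.
Proof. by rewrite /ip mulr_sumr; apply: eq_bigr => x _ /=; rewrite !mulrA. Qed.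
Lemma ipDr f g h : ip pi h (fun x => f x + g x) = ip pi h f + ip pi h g.
Proof. by rewrite ipC ipDl ipC (ipC g). Qed.
Lemma ipBr f g h : ip pi h (fun x => f x - g x) = ip pi h f - ip pi h g.
Proof. by rewrite ipC ipBl ipC (ipC g). Qed.
Lemma ipZr a f h : ip pi h (fun x => a * f x) = a * ip pi h f.
Proof. by rewrite ipC ipZl ipC. Qed.
Lemma ip0l h : ip pi (fun _ => 0) h = 0.
Proof. by rewrite /ip big1 // => x _; rewrite !mul0r. Qed.
Lemma ip0r h : ip pi h (fun _ => 0) = 0.
Proof. by rewrite ipC ip0l. Qed.

Lemma ip_ge0 f : 0 <= ip pi f f.
Proof. by rewrite /ip sumr_ge0 // => x _; rewrite mulr_ge0 ?sqr_ge0 // ltW. Qed.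

Lemma ip_eq0 f : ip pi f f = 0 -> f = (fun _ => 0).
Proof.
move=> H; apply: funext => x.
have := (@psumr_eq0P _ _ xpredT (fun i => f i * f i * pi i) (fun i _ => mulr_ge0 (sqr_ge0 (f i)) (ltW (pipos i))) H x isT).
move/eqP; rewrite mulf_eq0 (gt_eqF (pipos x)) orbF mulf_eq0 orbb.
by move/eqP.
Qed.

Lemma ip_gt0 f : f <> (fun _ => 0) -> 0 < ip pi f f.
Proof. by move=> nf; rewrite lt_neqAle ip_ge0 andbT eq_sym; apply/eqP => /ip_eq0. Qed.

Lemma l20_ip f : in_l20 pi f <-> ip pi f (fun _ => 1) = 0.
Proof. by rewrite /in_l20 /ip; under [X in _ = 0 <-> X = 0]eq_bigr do rewrite mulr1. Qed.


Lemma rev_sa K : reversible pi K -> sa K.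
Proof.
move=> rK f g; rewrite /ip /kapp.
transitivity (\sum_x \sum_y f x * g y * (pi x * K x y)).
  apply: eq_bigr => x _; rewrite mulr_sumr mulr_suml; apply: eq_bigr => y _; ring.
rewrite exchange_big /=; apply: eq_bigr => y _; rewrite mulr_suml mulr_suml; apply: eq_bigr => x _.
rewrite rK; ring.
Qed.

Lemma kapp_const1 K : (forall x, \sum_y K x y = 1) -> kapp K (fun _ => 1) = (fun _ => 1).
Proof. by move=> H; apply: funext => x; rewrite /kapp; under eq_bigr do rewrite mulr1; exact: H. Qed.

Lemma l20_kapp K f : sa K -> (forall x, \sum_y K x y = 1) -> in_l20 pi f -> in_l20 pi (kapp K f).
Proof. by move=> sK H /l20_ip lf; apply/l20_ip; rewrite -sK kapp_const1. Qed.

Definition Qpi := \sum_z (pi z)^-1.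

Lemma sq_le_ip f x : f x * f x <= ip pi f f * Qpi.
Proof.
have h1 : f x * f x * pi x <= ip pi f f.
  rewrite /ip (bigD1 x) //= lerDl sumr_ge0 // => i _.
  by rewrite mulr_ge0 ?sqr_ge0 ?ltW.
have h2 : (pi x)^-1 <= Qpi.
  rewrite /Qpi (bigD1 x) //= lerDl sumr_ge0 // => i _.
  by rewrite invr_ge0 ltW.
have px := pipos x.
have -> : f x * f x = (f x * f x * pi x) * (pi x)^-1 by rewrite mulfK // gt_eqF.
apply: ler_pM => //; first by rewrite mulr_ge0 ?sqr_ge0 ?ltW.
by rewrite invr_ge0 ltW.
Qed.

Lemma prod_le_ip f x y : `|f x * f y| <= ip pi f f * Qpi.
Proof.
have hx := sq_le_ip f x; have hy := sq_le_ip f y.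
have : `|f x * f y| *+ 2 <= f x * f x + f y * f y.
  rewrite mulr2n; have h3 := sqr_ge0 (f x - f y); have h4 := sqr_ge0 (f x + f y).
  case: (lerP 0 (f x * f y)) => h; [rewrite ger0_norm // | rewrite ltr0_norm //]; nra.
move=> H; have : `|f x * f y| *+ 2 <= (ip pi f f * Qpi) *+ 2 by rewrite mulr2n; apply: le_trans H _; rewrite mulr2n lerD.
by rewrite lerMn2r.
Qed.

Lemma quad_bound (c : X -> X -> R) f :
  `|\sum_x \sum_y c x y * (f x * f y)| <= (\sum_x \sum_y `|c x y|) * Qpi * ip pi f f.
Proof.
apply: le_trans (ler_norm_sum _ _ _) _.
rewrite mulr_suml mulr_suml; apply: ler_sum => x _.
apply: le_trans (ler_norm_sum _ _ _) _.
rewrite mulr_suml mulr_suml; apply: ler_sum => y _.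
rewrite normrM -mulrA [Qpi * _]mulrC; apply: ler_wpM2l; [exact: normr_ge0 | exact: prod_le_ip].
Qed.


Definition rhoset K := [set r : R | exists f : X -> R,
        [/\ in_l20 pi f, f <> (fun _ => 0) & r = `|ip pi f (kapp K f)| / ip pi f f]].
Definition opset K := [set r : R | exists f : X -> R,
        [/\ in_l20 pi f, f <> (fun _ => 0) &
            r = Num.sqrt (ip pi (kapp K f) (kapp K f)) / Num.sqrt (ip pi f f)]].

Lemma ip_kapp_quad K f : ip pi f (kapp K f) = \sum_x \sum_y (K x y * pi x) * (f x * f y).
Proof.
rewrite /ip /kapp; apply: eq_bigr => x _; rewrite mulr_sumr mulr_suml.
by apply: eq_bigr => y _; ring.
Qed.

Lemma ip_kapp2_quad K f : ip pi (kapp K f) (kapp K f) =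
   \sum_y \sum_z (\sum_x K x y * K x z * pi x) * (f y * f z).
Proof.
rewrite /ip /kapp.
transitivity (\sum_x \sum_y \sum_z (K x y * K x z * pi x) * (f y * f z)).
  apply: eq_bigr => x _; rewrite mulr_suml mulr_suml; apply: eq_bigr => y _.
  rewrite mulr_sumr mulr_suml; apply: eq_bigr => z _; ring.
rewrite exchange_big; apply: eq_bigr => y _ /=.
rewrite exchange_big; apply: eq_bigr => z _ /=.
by rewrite mulr_suml.
Qed.

Lemma rhoset_bound K : ubound (rhoset K) ((\sum_x \sum_y `|K x y * pi x|) * Qpi).
Proof.
move=> r [f [lf nf ->]]; have S0 := ip_gt0 nf.
rewrite ler_pdivrMr // ip_kapp_quad; exact: quad_bound.
Qed.

Lemma opset_bound K : ubound (opset K)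
  (Num.sqrt ((\sum_y \sum_z `|\sum_x K x y * K x z * pi x|) * Qpi)).
Proof.
move=> r [f [lf nf ->]]; have S0 := ip_gt0 nf.
have sS0 : 0 < Num.sqrt (ip pi f f) by rewrite sqrtr_gt0.
have Q0 : 0 <= Qpi by rewrite /Qpi sumr_ge0 // => *; rewrite invr_ge0 ltW.
have C0 : 0 <= (\sum_y \sum_z `|\sum_x K x y * K x z * pi x|) * Qpi.
  by rewrite mulr_ge0 // sumr_ge0 // => *; rewrite sumr_ge0.
rewrite ler_pdivrMr // -sqrtrM //.
rewrite ler_sqrt; last by rewrite mulr_ge0 // ltW.
rewrite ip_kapp2_quad; apply: le_trans (ler_norm _) _; exact: quad_bound.
Qed.

Lemma rho_ub K f : in_l20 pi f -> f <> (fun _ => 0) ->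
  `|ip pi f (kapp K f)| / ip pi f f <= rho pi K.
Proof.
move=> lf nf; apply: (sup_upper_bound (E := rhoset K)); last by exists f.
split; first by exists (`|ip pi f (kapp K f)| / ip pi f f); exists f.
by eexists; exact: rhoset_bound.
Qed.

Lemma op_ub K f : in_l20 pi f -> f <> (fun _ => 0) ->
  Num.sqrt (ip pi (kapp K f) (kapp K f)) / Num.sqrt (ip pi f f) <= opnorm_l20 pi K.
Proof.
move=> lf nf; apply: (sup_upper_bound (E := opset K)); last by exists f.
split; first by eexists; exists f.
by eexists; exact: opset_bound.
Qed.

Lemma rho_ge0 K : 0 <= rho pi K.
Proof.
case: (pselect (exists f, in_l20 pi f /\ f <> (fun _ => 0))) => [[f [lf nf]]|nex].
  apply: (le_trans _ (rho_ub K lf nf)).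
  by rewrite divr_ge0 // ip_ge0.
rewrite /rho (_ : [set r | _] = set0) ?sup0 //.
by apply/seteqP; split => r //= [f [lf nf _]]; apply: nex; exists f.
Qed.

Lemma opnorm_ge0 K : 0 <= opnorm_l20 pi K.
Proof.
case: (pselect (exists f, in_l20 pi f /\ f <> (fun _ => 0))) => [[f [lf nf]]|nex].
  apply: (le_trans _ (op_ub K lf nf)).
  by rewrite divr_ge0 // sqrtr_ge0.
rewrite /opnorm_l20 (_ : [set r | _] = set0) ?sup0 //.
by apply/seteqP; split => r //= [f [lf nf _]]; apply: nex; exists f.
Qed.


Lemma l20D f g : in_l20 pi f -> in_l20 pi g -> in_l20 pi (fun x => f x + g x).
Proof. by move=> /l20_ip a /l20_ip b; apply/l20_ip; rewrite ipDl a b addr0. Qed.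
Lemma l20B f g : in_l20 pi f -> in_l20 pi g -> in_l20 pi (fun x => f x - g x).
Proof. by move=> /l20_ip a /l20_ip b; apply/l20_ip; rewrite ipBl a b subr0. Qed.
Lemma l20Z a f : in_l20 pi f -> in_l20 pi (fun x => a * f x).
Proof. by move=> /l20_ip b; apply/l20_ip; rewrite ipZl b mulr0. Qed.

Lemma quad_rho K w : in_l20 pi w -> `|ip pi w (kapp K w)| <= rho pi K * ip pi w w.
Proof.
move=> lw; case: (pselect (w = (fun _ => 0))) => [->|nw].
  by rewrite ip0l normr0 mulr_ge0 ?rho_ge0 ?ip_ge0.
by rewrite -ler_pdivrMr ?ip_gt0 //; apply: rho_ub.
Qed.

Lemma polar_arith (r a A B uu vv uv : R) : 0 <= r ->
  `|A + a + (a + B)| <= r * (uu + uv + (uv + vv)) ->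
  `|A - a - (a - B)| <= r * (uu - uv - (uv - vv)) ->
  `|a| *+ 2 <= r * (uu + vv).
Proof.
move=> r0; rewrite !ler_norml => /andP[h1 h2] /andP[h3 h4].
rewrite mulr2n; case: (lerP 0 a) => ha; [rewrite ger0_norm // | rewrite ltr0_norm //]; lra.
Qed.

Lemma polar K u v : sa K -> in_l20 pi u -> in_l20 pi v ->
  `|ip pi u (kapp K v)| *+ 2 <= rho pi K * (ip pi u u + ip pi v v).
Proof.
move=> sK lu lv.
have e1 := quad_rho K (l20D lu lv); have e2 := quad_rho K (l20B lu lv).
rewrite kappD !ipDl !ipDr in e1; rewrite kappB !ipBl !ipBr in e2.
have s1 : ip pi v (kapp K u) = ip pi u (kapp K v) by rewrite sK ipC.
rewrite s1 in e1 e2.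
rewrite (ipC v u) in e1 e2.
exact: (polar_arith (rho_ge0 K) e1 e2).
Qed.



Lemma nrm_sq f : nrm f * nrm f = ip pi f f.
Proof. by rewrite /nrm -expr2 sqr_sqrtr // ip_ge0. Qed.
Lemma nrm_ge0 f : 0 <= nrm f.
Proof. exact: sqrtr_ge0. Qed.
Lemma nrm_gt0 f : f <> (fun _ => 0) -> 0 < nrm f.
Proof. by move=> nf; rewrite /nrm sqrtr_gt0 ip_gt0. Qed.

Lemma bil K u v : sa K -> in_l20 pi u -> in_l20 pi v ->
  `|ip pi u (kapp K v)| <= rho pi K * nrm u * nrm v.
Proof.
move=> sK lu lv; have r0 := rho_ge0 K.
case: (pselect (u = (fun _ => 0))) => [->|nu].
  by rewrite ip0l normr0 !mulr_ge0 ?nrm_ge0.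
case: (pselect (v = (fun _ => 0))) => [->|nv].
  by rewrite kapp0 ip0r normr0 !mulr_ge0 ?nrm_ge0.
have u0 := nrm_gt0 nu; have v0 := nrm_gt0 nv.
set t := nrm v / nrm u.
have t0 : 0 < t by rewrite divr_gt0.
have H := polar sK (l20Z t lu) lv.
rewrite ipZl ipZl ipZr normrM (gtr0_norm t0) in H.
have ht : t * nrm u = nrm v by rewrite /t mulfVK // gt_eqF.
rewrite -nrm_sq -(nrm_sq v) in H.
rewrite -(ler_pM2l t0).
have e1 : t * (t * (nrm u * nrm u)) = nrm v * nrm v by rewrite -ht; ring.
have e2 : t * (rho pi K * nrm u * nrm v) = rho pi K * (nrm v * nrm v) by rewrite -ht; ring.
rewrite e1 in H; rewrite e2.
move: H; set ta := t * _; set w := nrm v * nrm v; set rr := rho pi K.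
rewrite mulr2n mulrDr => H.
have : (ta + ta) <= (rr * w) + (rr * w) by [].
lra.
Qed.

End Gen.

Section Abs.
Variables (R : realType) (X : finType) (pi : X -> R).
Hypothesis pipos : forall x, 0 < pi x.
Variables (G M P : X -> X -> R).
Hypotheses (sG : sa pi G) (sM : sa pi M) (sP : sa pi P).
Hypotheses (rG : forall x, \sum_y G x y = 1) (rM : forall x, \sum_y M x y = 1)
  (rP : forall x, \sum_y P x y = 1).
Hypothesis GG : forall f, kapp G (kapp G f) = kapp G f.
Hypothesis MG : forall f, kapp M (kapp G f) = kapp G f.
Implicit Types (f g h : X -> R).

Lemma GM f : kapp G (kapp M f) = kapp G f.
Proof.
have H g : ip pi g (kapp G (kapp M f)) = ip pi g (kapp G f).
  by rewrite sG sM MG -sG.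
set d := fun x => kapp G (kapp M f) x - kapp G f x.
have : ip pi d d = 0 by rewrite {2}/d ipBr !H subrr.
move/(ip_eq0 pipos) => d0; apply: funext => x.
by apply/eqP; rewrite -subr_eq0; apply/eqP; move: (congr1 (fun F => F x) d0).
Qed.


Notation Mk k := (iter k (kapp M)).
Definition theta := opnorm_l20 pi (ksub M G).

Lemma sa_iter k f g : ip pi f (Mk k g) = ip pi (Mk k f) g.
Proof.
elim: k f => [//|k IH] f; rewrite iterS sM IH.
by rewrite iterSr.
Qed.

Lemma l20_iter k f : in_l20 pi f -> in_l20 pi (Mk k f).
Proof. by elim: k => [//|k IH] lf; rewrite iterS; apply: l20_kapp => //; apply: IH. Qed.

Lemma MkG k f : Mk k (kapp G f) = kapp G f.
Proof. by elim: k => [//|k IH]; rewrite iterS IH MG. Qed.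

Lemma GMk k f : kapp G (Mk k f) = kapp G f.
Proof. by elim: k => [//|k IH]; rewrite iterS GM IH. Qed.

Definition Dk k f := fun x => Mk k f x - kapp G f x.

Lemma D_succ k f : (0 < k)%N -> Dk k.+1 f = kapp (ksub M G) (Dk k f).
Proof.
move=> k0; rewrite kapp_ksub /Dk !kappB GMk GG MG iterS.
by apply: funext => x; rewrite subrr subr0.
Qed.

Lemma D1 f : Dk 1 f = kapp (ksub M G) f.
Proof. by rewrite kapp_ksub. Qed.

Lemma l20_D k f : in_l20 pi f -> in_l20 pi (Dk k f).
Proof. by move=> lf; apply: l20B; [apply: l20_iter | apply: l20_kapp]. Qed.

Lemma theta_ge0 : 0 <= theta.
Proof. exact: opnorm_ge0. Qed.

Lemma nrm_T g : in_l20 pi g -> nrm pi (kapp (ksub M G) g) <= theta * nrm pi g.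
Proof.
move=> lg; case: (pselect (g = (fun _ => 0))) => [->|ng].
  by rewrite kapp0 /nrm ip0l sqrtr0 mulr0.
rewrite -ler_pdivrMr ?nrm_gt0 //; exact: op_ub.
Qed.

Lemma nrm_D k f : (0 < k)%N -> in_l20 pi f -> nrm pi (Dk k f) <= theta ^+ k * nrm pi f.
Proof.
move=> + lf; elim: k => [//|k IH] _.
case: k IH => [|k] IH; first by rewrite D1 expr1; apply: nrm_T.
rewrite D_succ // exprS -mulrA.
apply: le_trans (nrm_T (l20_D _ lf)) _.
by apply: ler_wpM2l; [exact: theta_ge0 | exact: IH].
Qed.

Lemma ip_G f : ip pi (kapp G f) (kapp G f) <= ip pi f f.
Proof.
have e : ip pi (kapp G f) (kapp G f) = ip pi f (kapp G f) by rewrite -sG GG.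
have := ip_ge0 pipos (fun x => f x - kapp G f x).
rewrite !ipBl !ipBr e (ipC _ (kapp G f) f) => H.
lra.
Qed.

Lemma nrm_G f : nrm pi (kapp G f) <= nrm pi f.
Proof. by rewrite /nrm ler_sqrt ?ip_ge0 // ip_G. Qed.

Lemma rho_le_of K B : 0 <= B ->
  (forall f, in_l20 pi f -> f <> (fun _ => 0) -> `|ip pi f (kapp K f)| / ip pi f f <= B) ->
  rho pi K <= B.
Proof.
move=> B0 H.
case: (pselect (exists f, in_l20 pi f /\ f <> (fun _ => 0))) => [[f [lf nf]]|nex].
  apply: ge_sup; first by eexists; exists f.
  by move=> r [g [lg ng ->]]; apply: H.
rewrite /rho (_ : [set r | _] = set0) ?sup0 //.
by apply/seteqP; split => r //= [f [lf nf _]]; apply: nex; exists f.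
Qed.

Definition KM k := kmul (kmul (kpow M k) P) (kpow M k).
Definition KG := kmul (kmul G P) G.

Lemma kapp_KM k f : kapp (KM k) f = Mk k (kapp P (Mk k f)).
Proof. by rewrite /KM !kapp_kmul !kapp_kpow. Qed.
Lemma kapp_KG f : kapp KG f = kapp G (kapp P (kapp G f)).
Proof. by rewrite /KG !kapp_kmul. Qed.

Lemma upper_el k f : (0 < k)%N -> in_l20 pi f ->
  `|ip pi f (kapp (KM k) f)| <=
     (rho pi KG + rho pi P * (2 * theta ^+ k + theta ^+ (2 * k))) * ip pi f f.
Proof.
move=> k0 lf; rewrite kapp_KM sa_iter.
have eu : Mk k f = (fun x => kapp G f x + Dk k f x).
  by apply: funext => x; rewrite /Dk addrC subrK.
have lG : in_l20 pi (kapp G f) by apply: l20_kapp.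
have lD := l20_D k lf.
have rP0 := rho_ge0 pipos P; have t0 := theta_ge0.
have nG := nrm_G f; have nD := nrm_D k0 lf.
have nf0 := nrm_ge0 pi f.
rewrite eu; move: (Dk k f) lD nD => d lD nD.
rewrite kappD !ipDl !ipDr.
set g := kapp G f.
have b1 : `|ip pi g (kapp P g)| <= rho pi KG * ip pi f f.
  by rewrite /g -sG -kapp_KG; apply: quad_rho.
have b2 : `|ip pi g (kapp P d)| <= rho pi P * theta ^+ k * ip pi f f.
  apply: le_trans (bil pipos sP lG lD) _.
  have -> : rho pi P * theta ^+ k * ip pi f f = rho pi P * (nrm pi f * (theta ^+ k * nrm pi f)).
    by rewrite -(nrm_sq pipos f); ring.
  rewrite -mulrA; apply: ler_wpM2l => //; apply: ler_pM; rewrite ?nrm_ge0 //.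
have b3 : `|ip pi d (kapp P g)| <= rho pi P * theta ^+ k * ip pi f f.
  apply: le_trans (bil pipos sP lD lG) _.
  have -> : rho pi P * theta ^+ k * ip pi f f = rho pi P * ((theta ^+ k * nrm pi f) * nrm pi f).
    by rewrite -(nrm_sq pipos f); ring.
  rewrite -mulrA; apply: ler_wpM2l => //; apply: ler_pM; rewrite ?nrm_ge0 //.
have b4 : `|ip pi d (kapp P d)| <= rho pi P * theta ^+ (2 * k) * ip pi f f.
  apply: le_trans (bil pipos sP lD lD) _.
  have -> : rho pi P * theta ^+ (2 * k) * ip pi f f = rho pi P * ((theta ^+ k * nrm pi f) * (theta ^+ k * nrm pi f)).
    by rewrite -(nrm_sq pipos f) mul2n -addnn exprD; ring.
  rewrite -mulrA; apply: ler_wpM2l => //; apply: ler_pM; rewrite ?nrm_ge0 //.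
have -> : (rho pi KG + rho pi P * (2 * theta ^+ k + theta ^+ (2 * k))) * ip pi f f =
  (rho pi KG * ip pi f f + rho pi P * theta ^+ k * ip pi f f) + (rho pi P * theta ^+ k * ip pi f f
  + rho pi P * theta ^+ (2 * k) * ip pi f f) by ring.
apply: le_trans (ler_normD _ _) _; apply: lerD;
apply: le_trans (ler_normD _ _) _; apply: lerD => //.
Qed.

Lemma lower_el k f : in_l20 pi f -> f <> (fun _ => 0) ->
  `|ip pi f (kapp KG f)| / ip pi f f <= rho pi (KM k).
Proof.
move=> lf nf; have lG : in_l20 pi (kapp G f) by apply: l20_kapp.
rewrite kapp_KG sG.
have -> : ip pi (kapp G f) (kapp P (kapp G f)) = ip pi (kapp G f) (kapp (KM k) (kapp G f)).
  by rewrite kapp_KM MkG sa_iter MkG.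
case: (pselect (kapp G f = (fun _ => 0))) => [->|ng].
  by rewrite ip0l normr0 mul0r rho_ge0.
apply: le_trans (rho_ub pipos _ lG ng).
apply: ler_wpM2l => //; rewrite lef_pV2 ?posrE ?ip_gt0 //; exact: ip_G.
Qed.

Theorem abs_main k : (0 < k)%N ->
  0 <= rho pi (KM k) - rho pi KG /\ rho pi (KM k) - rho pi KG <= rho pi P * (2 * theta ^+ k + theta ^+ (2 * k)).
Proof.
move=> k0; split.
  rewrite subr_ge0; apply: rho_le_of; first exact: rho_ge0.
  by move=> f lf nf; apply: lower_el.
rewrite lerBlDl; apply: rho_le_of.
  by rewrite addr_ge0 ?mulr_ge0 ?addr_ge0 ?mulr_ge0 ?exprn_ge0 ?rho_ge0 ?theta_ge0.
move=> f lf nf; rewrite ler_pdivrMr ?ip_gt0 //; exact: upper_el.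
Qed.

End Abs.

Section Conc.
Variables (R : realType) (X : finType) (pi : X -> R).
Hypothesis pipos : forall x, 0 < pi x.
Variables (gT : finGroupType) (A : {group gT}) (to : {action gT &-> X}).
Implicit Types (f g h : X -> R).

Local Notation O x := (orb A to x).
Local Notation G := (gibbsK pi A to).
Local Notation M := (mhK pi A to).

Lemma orb_refl x : x \in O x.
Proof. exact: orbit_refl. Qed.
Lemma orb_sym x y : (y \in O x) = (x \in O y).
Proof. exact: orbit_sym. Qed.
Lemma orb_eq x y : y \in O x -> O y = O x.
Proof. by move=> h; apply/orbit_eqP. Qed.

Lemma Z_gt0 x : 0 < \sum_(z in O x) pi z.
Proof.
rewrite (bigD1 x) ?orb_refl //=; apply: (lt_le_trans (pipos x)).
by rewrite lerDl sumr_ge0 // => i _; rewrite ltW.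
Qed.

Lemma G_rev : reversible pi G.
Proof.
move=> x y; rewrite /gibbsK -orb_sym.
case: (boolP (x \in O y)) => h; last by rewrite !mulr0.
by rewrite (orb_eq h) mulrCA.
Qed.

Lemma G_rows x : \sum_y G x y = 1.
Proof.
by rewrite /gibbsK -big_mkcond /= -mulr_suml divff // gt_eqF // Z_gt0.
Qed.

Lemma G_supp x y : y \notin O x -> G x y = 0.
Proof. by rewrite /gibbsK => /negbTE ->. Qed.

Lemma M_supp x y : y \notin O x -> M x y = 0.
Proof.
move=> h; have nxy : y != x by apply: contraNneq h => ->; exact: orb_refl.
by rewrite /mhK (negbTE nxy) /mhK_off (negbTE h).
Qed.

Lemma M_rows x : \sum_y M x y = 1.
Proof.
rewrite (bigD1 x) //= {1}/mhK eqxx.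
rewrite (eq_bigr (fun z => mhK_off pi A to x z)); first by rewrite subrK.
by move=> y /negbTE nyx; rewrite /mhK nyx.
Qed.

Lemma M_rev : reversible pi M.
Proof.
move=> x y; case: (eqVneq y x) => [->//|nyx].
have nxy : x != y by rewrite eq_sym.
rewrite /mhK (negbTE nyx) (negbTE nxy) /mhK_off nyx nxy !andbT.
rewrite [x \in O y]orb_sym.
case: (boolP (y \in O x)) => h; last by rewrite !mulr0.
rewrite (orb_eq h).
have key (c a b : R) : 0 < a -> a * (c * Num.min 1 (b / a)) = c * Num.min a b.
  by move=> a0; rewrite mulrCA minr_pMr ?ltW // mulr1 [a * _]mulrC divfK // gt_eqF.
by rewrite !key // minC.
Qed.

Lemma Gf_const f x y : y \in O x -> kapp G f y = kapp G f x.
Proof. by move=> h; rewrite /kapp /gibbsK (orb_eq h). Qed.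

Lemma fix_G K f : (forall x y, y \notin O x -> K x y = 0) -> (forall x, \sum_y K x y = 1) ->
  kapp K (kapp G f) = kapp G f.
Proof.
move=> supp rows; apply: funext => x; rewrite {1}/kapp.
rewrite (eq_bigr (fun y => K x y * kapp G f x)).
  by rewrite -mulr_suml rows mul1r.
move=> y _; case: (boolP (y \in O x)) => h; first by rewrite (Gf_const f h).
by rewrite supp // !mul0r.
Qed.

End Conc.

Unset Implicit Arguments.

Theorem proposition3p7 (R : realType) (X : finType) (pi : X -> R)
  (P : X -> X -> R) (gT : finGroupType) (A : {group gT})
  (to : {action gT &-> X}) :
  is_pmf_full_support pi ->
  stochastic P -> reversible pi P -> ergodic P ->
  let G := gibbsK pi A to in
  let M := mhK pi A to in
  let theta := opnorm_l20 pi (ksub M G) in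
  (forall k : nat, (0 < k)%N ->
     0 <= rho pi (kmul (kmul (kpow M k) P) (kpow M k)) - rho pi (kmul (kmul G P) G)
     /\ rho pi (kmul (kmul (kpow M k) P) (kpow M k)) - rho pi (kmul (kmul G P) G)
        <= rho pi P * (2 * theta ^+ k + theta ^+ (2 * k))) /\
  (theta < 1 ->
     (fun k : nat => rho pi (kmul (kmul (kpow M k) P) (kpow M k))
                     - rho pi (kmul (kmul G P) G)) @ \oo --> (0 : R)).
Proof.
move=> [pipos _] [_ rP] revP _ G M theta.
have sG : sa pi G by apply: rev_sa; apply: G_rev.
have sM : sa pi M by apply: rev_sa; apply: M_rev.
have sP : sa pi P by apply: rev_sa.
have rG : forall x, \sum_y G x y = 1 by move=> x; apply: G_rows.
have rM : forall x, \sum_y M x y = 1 by move=> x; apply: M_rows.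
have GG f : kapp G (kapp G f) = kapp G f.
  by apply: fix_G => // x y; apply: G_supp.
have MG f : kapp M (kapp G f) = kapp G f.
  by apply: fix_G => // x y; apply: M_supp.
have main k : (0 < k)%N ->
     0 <= rho pi (kmul (kmul (kpow M k) P) (kpow M k)) - rho pi (kmul (kmul G P) G)
     /\ rho pi (kmul (kmul (kpow M k) P) (kpow M k)) - rho pi (kmul (kmul G P) G)
        <= rho pi P * (2 * theta ^+ k + theta ^+ (2 * k)).
  by move=> k0; exact: (abs_main pipos sG sM sP rG rM GG MG k0).
split => // t1.
have t0 : 0 <= theta by exact: opnorm_ge0.
have rP0 : 0 <= rho pi P by exact: rho_ge0.
apply: (@squeeze_cvgr _ _ _ _ (fun _ => 0) (fun k : nat => (3 * rho pi P) * theta ^+ k)).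
- near=> k.
  have k0 : (0 < k)%N by near: k; exists 1%N.
  have [h1 h2] := main k k0.
  rewrite h1 /=; apply: (le_trans h2).
  have e : theta ^+ (2 * k) <= theta ^+ k.
    rewrite mul2n -addnn exprD -{3}(mulr1 (theta ^+ k)).
    by apply: ler_wpM2l; rewrite ?exprn_ge0 // exprn_ile1 // ltW.
  have tk : 0 <= theta ^+ k by rewrite exprn_ge0.
  have e2 : rho pi P * theta ^+ (2 * k) <= rho pi P * theta ^+ k by apply: ler_wpM2l.
  have e3 : rho pi P * (2 * theta ^+ k + theta ^+ (2 * k)) =
    2 * (rho pi P * theta ^+ k) + rho pi P * theta ^+ (2 * k) by ring.
  have e4 : 3 * rho pi P * theta ^+ k = 3 * (rho pi P * theta ^+ k) by ring.
  rewrite e3 e4; lra.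
- exact: cvg_cst.
- rewrite -(mulr0 (3 * rho pi P)); apply: cvgMr; apply: cvg_expr.
  by rewrite ger0_norm.
Unshelve. all: by end_near.
Qed.
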